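(* Let $\mathcal{T}$ be an $\aleph_1$-directed poset, $X:\mathcal{T}\to\mathbf{Set}_*$ a diagram of pointed sets and $A$ an abelian group. Then $H(X,A)=0$, i.e. the natural map $\rho:(\lim_\mathcal{T}X)\wedge A\to\lim_\mathcal{T}(X\wedge A)$ is an isomorphism.
   Context: A poset $\mathcal{T}$ is $\aleph_1$-directed if every countable subset has an upper bound in $\mathcal{T}$; it is regarded as a category with a single morphism $t\to s$ whenever $t\ge s$. For a pointed set $Y$, $Y\wedge A:=\bigoplus_{Y\setminus\{*\}}A$ (finitely supported pointed maps $Y\to A$), functorial via $f_*(sv)=f(s)v$, where $sv$ is the element with value $v$ at $s$ ($*v=0$). $\rho(xv)(t)=x(t)v$; $G(X,A):=\lim_\mathcal{T}(X\wedge A)$, $K(X,A)=\mathrm{Im}\,\rho$, $H(X,A):=G(X,A)/K(X,A)$. *)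

(* Defs.v *)
From HB Require Import structures.
From mathcomp Require Import all_boot all_order all_algebra.
From mathcomp Require Import boolp classical_sets cardinality fsbigop.
Set Implicit Arguments. Unset Strict Implicit. Unset Printing Implicit Defensive.
Import Order.TTheory GRing.Theory.
Local Open Scope classical_set_scope.
Local Open Scope ring_scope.

Definition aleph1_directed (d : Order.disp_t) (T : porderType d) : Prop :=
  forall S : set T, countable S -> exists u : T, forall s, S s -> (s <= u)%O.

(* A diagram T -> Set_* : a morphism t -> s exists iff t >= s, so for s <= t
   we get a pointed map X t -> X s, functorially. *)
Record pdiagram (d : Order.disp_t) (T : porderType d) := PDiagram {
  obj :> T -> Type;
  pt : forall t, obj t;
  dmap : forall s t : T, (s <= t)%O -> obj t -> obj s;
  dmap_pt : forall s t (h : (s <= t)%O), dmap h (pt t) = pt s;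
  dmap_id : forall t (h : (t <= t)%O) x, dmap h x = x;
  dmap_comp : forall r s t (h1 : (r <= s)%O) (h2 : (s <= t)%O) (h3 : (r <= t)%O) x,
      dmap h1 (dmap h2 x) = dmap h3 x
}.

(* Y ∧ A for a pointed set (Y, y0): finitely supported pointed maps Y -> A *)
Definition smash (Y : Type) (y0 : Y) (A : zmodType) : set (Y -> A) :=
  [set g | g y0 = 0 /\ finite_set [set y | g y != 0]].

(* functoriality: f_*(s v) = f(s) v, i.e. (f_* g)(z) = sum_{f y = z} g y for z <> base *)
Definition push (Y Z : Type) (z0 : Z) (A : zmodType) (f : Y -> Z) (g : Y -> A)
  : Z -> A :=
  fun z => if `[< z = z0 >] then 0
           else \sum_(y \in [set y : {classic Y} | f y = z]) g y.

Section Lim.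
Context (d : Order.disp_t) (T : porderType d) (X : pdiagram T).

Definition limX : Type :=
  {x : forall t, X t | forall s t (h : (s <= t)%O), dmap h (x t) = x s}.

Lemma limX_pt_proof : forall s t (h : (s <= t)%O), dmap h (pt X t) = pt X s.
Proof. exact: dmap_pt. Qed.

Definition limX_pt : limX := exist _ (fun t => pt X t) limX_pt_proof.

Definition proj (t : T) (x : limX) : X t := proj1_sig x t.

Definition Glim (A : zmodType) : set (forall t, X t -> A) :=
  [set G | (forall t, smash (pt X t) (G t)) /\
           forall s t (h : (s <= t)%O), push (pt X s) (dmap h) (G t) = G s].

Definition rho (A : zmodType) (g : limX -> A) : forall t, X t -> A :=
  fun t => push (pt X t) (proj t) g.
End Lim.

Arguments Glim {d T} X A.
Arguments rho {d T} X {A} g.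
Arguments limX_pt {d T} X.

(* Main.v *)
Require Import Defs.
From HB Require Import structures.
From mathcomp Require Import all_boot all_order all_algebra.
From mathcomp Require Import boolp classical_sets cardinality fsbigop.
Set Implicit Arguments. Unset Strict Implicit. Unset Printing Implicit Defensive.
Import Order.TTheory GRing.Theory.
Local Open Scope classical_set_scope.
Local Open Scope ring_scope.

Section Gen.
Variable A : zmodType.

Lemma sum_nz (I : eqType) (s : seq I) (P : pred I) (F : I -> A) :
  \sum_(i <- s | P i) F i != 0 -> exists2 i, i \in s & P i /\ F i != 0.
Proof.
move=> H; have [//|Hn] := pselect (exists2 i, i \in s & P i /\ F i != 0).
case/negP: H; apply/eqP; rewrite big_seq_cond big1 // => i /andP[si Pi].
by apply/eqP/negPn/negP => nz; apply: Hn; exists i.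
Qed.

Lemma sum1 (I : eqType) (s : seq I) (P : pred I) (F : I -> A) y :
  uniq s -> y \in s -> (forall z, z \in s -> P z = (z == y)) ->
  \sum_(i <- s | P i) F i = F y.
Proof.
move=> us ys HP; rewrite big_mkcond (bigD1_seq y) //= HP // eqxx.
rewrite big_seq_cond big1 ?addr0 // => i /andP[si ni].
by rewrite HP // (negbTE ni).
Qed.

Lemma uniq_map_inj (I J : eqType) (f : I -> J) (s : seq I) :
  uniq (map f s) -> {in s &, injective f}.
Proof.
elim: s => // a s IH /= /andP[na us] x y; rewrite !inE.
case/orP=> [/eqP->|xs]; case/orP=> [/eqP->|ys] //.
- by move=> e; case/negP: na; rewrite e map_f.
- by move=> e; case/negP: na; rewrite -e map_f.
- exact: IH.
Qed.

Lemma push_seq (Y Z : Type) (z0 : Z) (f : Y -> Z) (g : Y -> A)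
    (s : seq {classic Y}) z :
  uniq s -> (forall y, g y != 0 -> y \in s) -> z <> z0 ->
  push z0 f g z = \sum_(y <- s | `[< f y = z >]) g y.
Proof.
move=> us sup nz; rewrite /push asboolF //.
rewrite [RHS]bigfs //; last first.
  by move=> i _ ni; apply/eqP; apply: contraNT ni => /sup.
apply: eq_fsbigl; apply/seteqP; split => y /=; by rewrite asboolE.
Qed.

Lemma supp_seq (Y : Type) (g : Y -> A) : finite_set [set y | g y != 0] ->
  exists s : seq {classic Y}, uniq s /\ forall y, (y \in s) = (g y != 0).
Proof.
move=> fin; exists (finmap.enum_fset (fset_set [set y : {classic Y} | g y != 0])); split.
  exact: finmap.fset_uniq.
move=> y; rewrite in_fset_set //; apply/idP/idP; rewrite ?mem_setE // => h; rewrite mem_setE.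
Qed.
End Gen.

Section Main.
Variables (d : Order.disp_t) (T : porderType d) (X : pdiagram T) (A : zmodType).
Hypothesis HT : aleph1_directed T.

Lemma limX_eq (x y : limX X) : (forall t, proj t x = proj t y) -> x = y.
Proof.
case: x y => [x px] [y py]; rewrite /proj /= => H.
have E : x = y by apply: functional_extensionality_dep.
subst; congr exist; exact: Prop_irrelevance.
Qed.

Lemma dmap_proj s t (h : (s <= t)%O) (x : limX X) : dmap h (proj t x) = proj s x.
Proof. by case: x => x px; rewrite /proj /=. Qed.

Lemma rho_pt (g : limX X -> A) t : rho X g t (pt X t) = 0.
Proof. by rewrite /rho /push asboolT. Qed.

Lemma rho_seq (g : limX X -> A) (sg : seq {classic (limX X)}) t z :
  uniq sg -> (forall x, g x != 0 -> x \in sg) -> z <> pt X t ->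
  rho X g t z = \sum_(x <- sg | `[< proj t x = z >]) g x.
Proof. by move=> *; apply: push_seq. Qed.

Lemma rho_supp (g : limX X -> A) (sg : seq {classic (limX X)}) t z :
  uniq sg -> (forall x, g x != 0 -> x \in sg) -> rho X g t z != 0 ->
  z \in undup [seq (proj t x : {classic (X t)}) | x <- sg].
Proof.
move=> us sup nz.
have zp : z <> pt X t by move=> e; move: nz; rewrite e rho_pt eqxx.
rewrite (@mem_undup {classic (X t)}); move: nz; rewrite (rho_seq us sup zp) => /sum_nz [x xs [/asboolP <- _]].
exact: map_f.
Qed.

Lemma part1 (g : limX X -> A) : smash (limX_pt X) g -> Glim X A (rho X g).
Proof.
case=> _ fin; have [sg [us hs]] := supp_seq fin.
have sup : forall x, g x != 0 -> x \in sg by move=> x; rewrite hs.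
split.
  move=> t; split; first exact: rho_pt.
  apply: sub_finite_set (finite_seq (undup [seq (proj t x : {classic (X t)}) | x <- sg])).
  by move=> z /= nz; exact: (rho_supp us sup nz).
move=> s t h; apply/funext => z.
have [->|zp] := pselect (z = pt X s); first by rewrite rho_pt /push asboolT.
pose S' := undup [seq (proj t x : {classic (X t)}) | x <- sg].
rewrite (@push_seq _ _ _ _ _ _ S') ?undup_uniq //; last first.
  by move=> y; apply: rho_supp.
rewrite (rho_seq us sup zp).
transitivity (\sum_(y <- S' | `[< dmap h y = z >]) \sum_(x <- sg | `[< proj t x = y >]) g x).
  apply: eq_bigr => y /asboolP e; apply: rho_seq => // ey.
  by apply: zp; rewrite -e ey dmap_pt.
rewrite (exchange_big_dep xpredT) //=.
rewrite [RHS]big_mkcond /=; apply: eq_big_seq => x xs.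
have [/asboolP e|ne] := boolP `[< proj s x = z >].
- rewrite (@sum1 _ _ _ _ _ (proj t x : {classic (X t)})) ?undup_uniq //.
    by rewrite mem_undup map_f.
  move=> y _; apply/andP/eqP => [[_ /asboolP <-] //| ->]; split; apply/asboolP => //.
  by rewrite dmap_proj.
- rewrite big1 // => y /andP[/asboolP dy /asboolP py]; case/negP: ne; apply/asboolP.
  by rewrite -dy -py dmap_proj.
Qed.

Lemma ub2 (a b : T) : exists u, (a <= u)%O /\ (b <= u)%O.
Proof.
have [|u Hu] := @HT [set a; b].
  apply: finite_set_countable; apply: sub_finite_set (finite_seq [:: a; b]).
  by move=> x /= [->|->]; rewrite !inE eqxx ?orbT.
by exists u; split; apply: Hu; [left|right].
Qed.

Lemma Tinh : exists u : T, True.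
Proof. have [u _] := HT (countable0 T). by exists u. Qed.

Lemma proj_down (x y : limX X) w u (h : (w <= u)%O) :
  proj u x = proj u y -> proj w x = proj w y.
Proof. by move=> e; rewrite -(dmap_proj h x) -(dmap_proj h y) e. Qed.

Lemma sep_one (x : limX X) (l : seq {classic (limX X)}) :
  exists u, forall y, y \in l -> y <> x -> proj u x <> proj u y.
Proof.
elim: l => [|y l [u2 Hu2]]; first by have [u _] := Tinh; exists u.
have [ex|nx] := pselect (y = x).
  exists u2 => z; rewrite inE => /orP[/eqP -> //|]; exact: Hu2.
have [w Hw] : exists w, proj w x <> proj w y.
  apply: contra_notP nx => /forallNP Hn; apply/esym/limX_eq => t.
  by apply: contra_notP (Hn t).
have [u [h1 h2]] := ub2 u2 w.
exists u => z; rewrite inE => /orP[/eqP -> _|zl zx] e.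
  by apply: Hw; apply: proj_down h2 e.
by apply: (Hu2 z zl zx); apply: proj_down h1 e.
Qed.

Lemma inj_exists (l : seq {classic (limX X)}) :
  exists u, {in l &, injective (proj u)}.
Proof.
elim: l => [|x l [u1 Hu1]]; first by have [u _] := Tinh; exists u.
have [u2 Hu2] := sep_one x l.
have [u [h1 h2]] := ub2 u1 u2.
exists u => a b; rewrite !inE => /orP[/eqP ->|al] /orP[/eqP ->|bl] e //.
- have [//|bx] := pselect (b = x); case: (Hu2 b bl bx); exact: proj_down h2 e.
- have [//|ax] := pselect (a = x); case: (Hu2 a al ax); apply: esym; exact: proj_down h2 e.
- by apply: Hu1 => //; apply: proj_down h1 e.
Qed.

Lemma part2 (g1 g2 : limX X -> A) : smash (limX_pt X) g1 -> smash (limX_pt X) g2 ->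
  rho X g1 = rho X g2 -> g1 = g2.
Proof.
case=> p1 fin1 [p2 fin2] E.
have [s1 [_ hs1]] := supp_seq fin1; have [s2 [_ hs2]] := supp_seq fin2.
pose L : seq {classic (limX X)} := undup ((limX_pt X : {classic (limX X)}) :: s1 ++ s2).
have uL : uniq L by apply: undup_uniq.
have ptL : (limX_pt X : {classic (limX X)}) \in L by rewrite (@mem_undup {classic (limX X)}) inE eqxx.
have sup1 x : g1 x != 0 -> x \in L by rewrite -hs1 (@mem_undup {classic (limX X)}) !inE mem_cat => ->; rewrite !orbT.
have sup2 x : g2 x != 0 -> x \in L by rewrite -hs2 (@mem_undup {classic (limX X)}) !inE mem_cat => ->; rewrite !orbT.
have [u Hu] := inj_exists L.
apply/funext => x.
have [->|xp] := pselect (x = limX_pt X); first by rewrite p1 p2.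
have [xL|xL] := boolP (x \in L); last first.
  have e1 : g1 x = 0 by apply/eqP; apply: contraNT xL; apply: sup1.
  have e2 : g2 x = 0 by apply/eqP; apply: contraNT xL; apply: sup2.
  by rewrite e1 e2.
have zp : proj u x <> pt X u.
  by move=> e; apply: xp; apply: Hu => //.
have key (g : limX X -> A) : (forall y, g y != 0 -> y \in L) -> rho X g u (proj u x) = g x.
  move=> sup; rewrite (rho_seq uL sup zp); apply: sum1 => // y yL.
  apply/asboolP/eqP => [e|->] //; exact: Hu.
by rewrite -(key g1 sup1) -(key g2 sup2) E.
Qed.

Section Part3.
Local Unset Implicit Arguments.
Variables (G : forall t, X t -> A) (HG : Glim X A G).
Local Set Implicit Arguments.

Definition S t : seq {classic (X t)} :=
  finmap.enum_fset (fset_set [set y : {classic (X t)} | G t y != 0]).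

Lemma S_uniq t : uniq (S t).
Proof. exact: finmap.fset_uniq. Qed.

Lemma S_mem t (y : {classic (X t)}) : (y \in S t) = (G t y != 0).
Proof.
have fin := (HG.1 t).2.
rewrite /S in_fset_set //; apply/idP/idP; rewrite ?mem_setE // => h; rewrite mem_setE.
Qed.

Lemma S_pt t : (pt X t : {classic (X t)}) \notin S t.
Proof. by rewrite S_mem (HG.1 t).1 eqxx. Qed.

Lemma push_G s t (h : (s <= t)%O) z : z <> pt X s ->
  G s z = \sum_(y <- S t | `[< dmap h y = z >]) G t y.
Proof.
move=> zp; rewrite -(HG.2 s t h) (@push_seq _ _ _ _ _ _ (S t) _ (S_uniq t)) // => y.
by rewrite S_mem.
Qed.

Lemma lift_ex s t (h : (s <= t)%O) (y' : {classic (X s)}) : y' \in S s ->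
  exists2 y : {classic (X t)}, y \in S t & dmap h y = y'.
Proof.
move=> ys; have yp : y' <> pt X s by move=> e; move: ys; rewrite e (negbTE (S_pt s)).
move: ys; rewrite S_mem (push_G h yp) => /sum_nz [y yS [/asboolP e _]].
by exists y.
Qed.

Lemma Lsub s t (h : (s <= t)%O) :
  {subset S s <= [seq (dmap h y : {classic (X s)}) | y <- S t]}.
Proof. by move=> y' /(lift_ex h) [y yS <-]; apply: map_f. Qed.

Lemma size_mono s t (h : (s <= t)%O) : (size (S s) <= size (S t))%N.
Proof.
by rewrite -(size_map (fun y : {classic (X t)} => (dmap h y : {classic (X s)})));
  apply: uniq_leq_size (S_uniq s) (Lsub h).
Qed.

Lemma bounded : exists B, forall t, (size (S t) <= B)%N.
Proof.
apply: contra_notP (fun H : False => H) => nB; exfalso.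
have H : forall B : nat, exists t : T, (B < size (S t))%N.
  move=> B; apply: contra_notP nB => /forallNP Hn; exists B => t.
  by rewrite leqNgt; apply/negP => /(fun h => Hn t h).
have [f Hf] := choice H.
have [|u Hu] := @HT (range f).
  exact: (card_le_trans (card_image_le f setT) (countableP setT)).
have := Hf (size (S u)); rewrite ltnNge => /negP; apply.
apply: size_mono; apply: Hu; by exists (size (S u)).
Qed.

Lemma max_ex : exists t0, forall t, (size (S t) <= size (S t0))%N.
Proof.
have [B HB] := bounded; have [u _] := Tinh.
have exP : exists i, `[< exists t, size (S t) = i >] by exists (size (S u)); apply/asboolP; exists u.
have ubP : forall i, `[< exists t, size (S t) = i >] -> (i <= B)%N.
  by move=> i /asboolP [t <-].
case: (ex_maxnP exP ubP) => i /asboolP [t0 e] Hm.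
exists t0 => t; rewrite e; apply: Hm; apply/asboolP; by exists t.
Qed.

Variable t0 : T.
Hypothesis Ht0 : forall t, (size (S t) <= size (S t0))%N.

Definition good t := size (S t) = size (S t0).

Lemma up_good (a b : T) : exists u, [/\ (a <= u)%O, (b <= u)%O & good u].
Proof.
have [u1 [h1 h2]] := ub2 a b; have [u [h3 h4]] := ub2 u1 t0.
exists u; split; [exact: le_trans h3|exact: le_trans h3|].
by apply/eqP; rewrite eqn_leq Ht0 size_mono.
Qed.

Section Good.
Variables (t u : T) (h : (t <= u)%O) (gt : good t) (gu : good u).

Lemma L_uniq : uniq [seq (dmap h y : {classic (X t)}) | y <- S u].
Proof.
by apply: leq_size_uniq (S_uniq t) (Lsub h) _; rewrite size_map gt gu.
Qed.

Lemma L_mem : S t =i [seq (dmap h y : {classic (X t)}) | y <- S u].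
Proof.
by have [] := uniq_min_size (S_uniq t) (Lsub h); rewrite ?size_map ?gt ?gu.
Qed.

Lemma La (y : {classic (X u)}) : y \in S u -> (dmap h y : {classic (X t)}) \in S t.
Proof. by move=> yS; rewrite L_mem map_f. Qed.

Lemma Lb : {in S u &, injective (fun y : {classic (X u)} => (dmap h y : {classic (X t)}))}.
Proof. exact: (@uniq_map_inj {classic (X u)} {classic (X t)} (fun y => dmap h y) (S u) L_uniq). Qed.

Lemma Ld (y : {classic (X u)}) : y \in S u -> G t (dmap h y) = G u y.
Proof.
move=> yS; have yp : dmap h y <> pt X t.
  by move=> e; move: (La yS); rewrite e (negbTE (S_pt t)).
rewrite (push_G h yp); apply: sum1 => [|//|z zS]; first exact: S_uniq.
apply/asboolP/eqP => [e|-> //]; exact: Lb.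
Qed.
End Good.

Definition thrP t (y : X t) s (z : X s) : Prop :=
  exists u (hs : (s <= u)%O) (ht : (t <= u)%O) (y' : {classic (X u)}),
    [/\ good u, y' \in S u, dmap ht y' = y & dmap hs y' = z].

Definition thrf t (y : X t) s : X s :=
  @xget {classic (X s)} (pt X s) (@thrP t y s).

Lemma thr_unique t (y : X t) s (z1 z2 : X s) : good t ->
  thrP y z1 -> thrP y z2 -> z1 = z2.
Proof.
move=> gt [u1 [hs1 [ht1 [y1 [g1 y1S e1 <-]]]]] [u2 [hs2 [ht2 [y2 [g2 y2S e2 <-]]]]].
have [u3 [h1 h2 g3]] := up_good u1 u2.
have [y3 y3S e3] := lift_ex h1 y1S.
have y2'S := La h2 g2 g3 y3S.
have E : (dmap h2 y3 : {classic (X u2)}) = y2.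
  apply: (Lb (h:=ht2) gt g2 y2'S y2S) => /=.
  rewrite e2 (dmap_comp _ _ (le_trans ht1 h1)) -e1 -e3.
  by rewrite (dmap_comp _ _ (le_trans ht1 h1)).
by rewrite -e3 -E (dmap_comp hs1 h1 (le_trans hs1 h1)) (dmap_comp hs2 h2 (le_trans hs1 h1)).
Qed.

Lemma thr_spec t (y : X t) s u (hs : (s <= u)%O) (ht : (t <= u)%O) (y' : {classic (X u)}) :
  good t -> good u -> y' \in S u -> dmap ht y' = y -> thrf y s = dmap hs y'.
Proof.
move=> gt gu y'S e.
have P1 : thrP y (dmap hs y') by exists u, hs, ht, y'.
apply: (thr_unique gt _ P1); rewrite /thrf; apply: xgetPex; by exists (dmap hs y').
Qed.

Lemma thr_ex t (y : X t) s : good t -> (y : {classic (X t)}) \in S t ->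
  exists u (hs : (s <= u)%O) (ht : (t <= u)%O) (y' : {classic (X u)}),
    [/\ good u, y' \in S u & dmap ht y' = y].
Proof.
move=> gt yS; have [u [hs ht gu]] := up_good s t.
have [y' y'S e] := lift_ex ht yS.
by exists u, hs, ht, y'.
Qed.

Lemma thr_compat t (y : X t) : good t -> (y : {classic (X t)}) \in S t ->
  forall s' s (h : (s' <= s)%O), dmap h (thrf y s) = thrf y s'.
Proof.
move=> gt yS s' s h.
have [u [hs [ht [y' [gu y'S e]]]]] := thr_ex s gt yS.
rewrite (thr_spec hs gt gu y'S e) (thr_spec (le_trans h hs) gt gu y'S e).
exact: dmap_comp.
Qed.

Lemma thr_self t (y : X t) : good t -> (y : {classic (X t)}) \in S t -> thrf y t = y.
Proof.
move=> gt yS; have [u [hs [ht [y' [gu y'S e]]]]] := thr_ex t gt yS.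
by rewrite (thr_spec ht gt gu y'S e).
Qed.


Lemma gt0 : good t0.
Proof. by []. Qed.

Definition thrL (y : X t0) : limX X :=
  match pselect (forall s' s (h : (s' <= s)%O), dmap h (thrf y s) = thrf y s') with
  | left p => exist _ (thrf y) p
  | right _ => limX_pt X
  end.

Lemma thrL_proj (y : X t0) : (y : {classic (X t0)}) \in S t0 ->
  forall s, proj s (thrL y) = thrf y s.
Proof.
move=> yS s; rewrite /thrL; case: pselect => [p //|np].
by case: np; apply: thr_compat gt0 yS.
Qed.

Lemma thrL_inj : {in S t0 &, injective thrL}.
Proof.
move=> a b aS bS e.
by rewrite -(thr_self gt0 aS) -(thr_self gt0 bS) -(thrL_proj aS) -(thrL_proj bS) e.
Qed.

Definition gg (x : limX X) : A := \sum_(y <- S t0 | `[< thrL y = x >]) G t0 y.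

Lemma gg_thrL (y : {classic (X t0)}) : y \in S t0 -> gg (thrL y) = G t0 y.
Proof.
move=> yS; have yS' := yS; rewrite /gg; apply: sum1 (S_uniq _) yS' _ => z zS.
by apply/asboolP/eqP => [e|->//]; exact: (thrL_inj zS yS e).
Qed.

Definition L0 : seq {classic (limX X)} := [seq (thrL y : {classic (limX X)}) | y <- S t0].

Lemma uL0 : uniq L0.
Proof. by rewrite /L0 (@map_inj_in_uniq {classic (X t0)} {classic (limX X)}) ?S_uniq // => a b aS bS e; exact: (thrL_inj aS bS e). Qed.

Lemma gg_sup x : gg x != 0 -> x \in L0.
Proof. by rewrite /gg => /sum_nz [y yS [/asboolP <- _]]; rewrite /L0; exact: (@map_f {classic (X t0)} {classic (limX X)} thrL _ _ yS). Qed.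

Lemma gg_smash : smash (limX_pt X) gg.
Proof.
split.
  rewrite /gg big1_seq // => y /andP[/asboolP e yS]; exfalso.
  have h := thrL_proj yS t0; rewrite e (thr_self gt0 yS) /proj /= in h.
  by move: yS; rewrite -h (negbTE (S_pt t0)).
by apply: sub_finite_set (finite_seq L0) => x /= nz; apply: gg_sup.
Qed.

Lemma gg_rho : rho X gg = G.
Proof.
apply: functional_extensionality_dep => s; apply/funext => z.
have [->|zp] := pselect (z = pt X s); first by rewrite rho_pt (HG.1 s).1.
rewrite (rho_seq uL0 gg_sup zp) big_map.
transitivity (\sum_(y <- S t0 | `[< thrf y s = z >]) G t0 y).
  rewrite [LHS](@big_seq_cond _ _ _ {classic (X t0)}) [RHS]big_seq_cond; apply: eq_big => [y|y /andP[yS _]]; last first.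
    exact: (gg_thrL yS).
  by case yS: (y \in S t0) => //=; rewrite thrL_proj.
have [u [hs h0 gu]] := up_good s t0.
rewrite (push_G hs zp).
rewrite (perm_big _ (uniq_perm (S_uniq t0) (L_uniq h0 gt0 gu) (L_mem h0 gt0 gu))) big_map.
rewrite [LHS](@big_seq_cond _ _ _ {classic (X u)}) [RHS]big_seq_cond; apply: eq_big => [y'|y' /andP[y'S _]]; last first.
  exact: Ld.
case y'S: (y' \in S u) => //=.
by rewrite (thr_spec hs gt0 gu y'S (erefl (dmap h0 y'))).
Qed.

End Part3.

Lemma part3 (G : forall t, X t -> A) : Glim X A G ->
  exists g : limX X -> A, smash (limX_pt X) g /\ rho X g = G.
Proof.
move=> HG; have [t0 Ht0] := max_ex HG.
by eexists; split; [exact: (gg_smash HG Ht0)|exact: (gg_rho HG Ht0)].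
Qed.
End Main.

Unset Implicit Arguments.
Local Close Scope ring_scope.
Local Close Scope classical_set_scope.

Theorem mainTheorem10 (d : Order.disp_t) (T : porderType d)
    (HT : aleph1_directed T) (X : pdiagram T) (A : zmodType) :
  [/\ forall g : limX X -> A, smash (limX_pt X) g -> Glim X A (rho X g),
      forall g1 g2 : limX X -> A, smash (limX_pt X) g1 -> smash (limX_pt X) g2 ->
                    rho X g1 = rho X g2 -> g1 = g2
    & forall G, Glim X A G ->
        exists g : limX X -> A, smash (limX_pt X) g /\ rho X g = G].
Proof.
split.
- exact: part1.
- exact: (part2 HT).
- exact: (part3 HT).
Qed.
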